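(* Let $L\ge2$ be an integer. Let $\bm{\xi}=\{\xi_{M,U}:(M,U)\in\mathcal{M}\times\mathcal{U},\ 0\le c(M,U)\le1\}$ be real constants with $|\xi_{M,U}|\le1$. Suppose $\eta_2$ and $\{\delta_2(N)\}_{N=1,2,\dots}$ satisfy $\exp[-N\delta_2(N)]\le\eta_2$ for all $N\ge 1$. If the random variables $(N,m^N,u^N,x^N)$ described in the context satisfy, for $N\ge1$, $$\Pr\{x^N\mid N,m^N,u^N\}=\prod_{k=1}^N[c(m_k,u_k)]^{x_k}[1-c(m_k,u_k)]^{1-x_k},$$ then $$\Pr\{N\ge1,\ \tilde P_{m^N,u^N,x^N}\notin\mathcal{P}^{\bm{\xi},\delta_2(N)}\}\le\eta_2.$$
   Context: For a finite set $\Omega$, $\mathcal{P}_\Omega$ is the set of probability mass functions on $\Omega$; for $\omega^n\in\Omega^n$ the type is $\tilde P_{\omega^n}(\omega)=\frac1n|\{i:\omega_i=\omega\}|$ ($\tilde P_{m^N,u^N,x^N}$ is the type of the sequence of triples $(m_k,u_k,x_k)$). Let $\mathcal{M}=\{0,\dots,L\}$, $\mathcal{U}=\mathcal{X}=\{0,1\}$, $\mathcal{W}=\{(M,U,X)\in\mathcal{M}\times\mathcal{U}\times\mathcal{X}:0\le M-U-X\le L-2\}$, and $c(M,U):=(M-U)/(L-1)$. For $P\in\mathcal{P}_{\mathcal{W}}$, $P_{\mathcal{M}\times\mathcal{U}}$ is the distribution of $(M,U)$ under $P$. Random variables: on a probability space (probability $\Pr$), $N$ is a non-negative integer and when $N\ge1$,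 $m^N\in\mathcal{M}^N$, $u^N\in\mathcal{U}^N$, $x^N\in\mathcal{X}^N$ with $(m_k,u_k,x_k)\in\mathcal{W}$ for all $k$. $\mathcal{P}^{\bm{\xi},\delta_2}:=\{P\in\mathcal{P}_{\mathcal{W}}: \mathbb{E}_{(M,U,X)\sim P}[(X-c(M,U))\xi_{M,U}]\le\frac{\delta_2}{3}+[(\frac{\delta_2}{3})^2+2\delta_2\,\mathbb{E}_{(M,U)\sim P_{\mathcal{M}\times\mathcal{U}}}[c(M,U)(1-c(M,U))\xi_{M,U}^2]]^{1/2}\}$. *)

(* Defs.v *)
From HB Require Import structures.
From mathcomp Require Import all_boot all_order all_algebra.
From mathcomp Require Import all_classical all_reals all_analysis.
Unset Printing Implicit Defensive.
Import Order.TTheory GRing.Theory Num.Theory.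
Local Open Scope ring_scope.

Section Defs.
Variables (R : realType) (L : nat).

(* M = {0..L} as 'I_(L.+1); U = X = {0,1} as bool; a triple (M,U,X) is ((M,U),X). *)
Definition triple := ('I_L.+1 * bool * bool)%type.

Definition cMU (M : 'I_L.+1) (U : bool) : R :=
  ((M : nat)%:R - (U : nat)%:R) / ((L : nat)%:R - 1).

Definition inW (w : triple) : Prop :=
  let: (M, U, X) := w in
  (0 <= (M : nat)%:Z - (U : nat)%:Z - (X : nat)%:Z)%R /\
  ((M : nat)%:Z - (U : nat)%:Z - (X : nat)%:Z <= (L : nat)%:Z - 2)%R.

(* P_W : probability mass functions on W (viewed as functions on all
   triples vanishing outside W) *)
Definition pmf_on_W (P : triple -> R) : Prop :=
  (forall w, 0 <= P w) /\ (\sum_(w : triple) P w = 1) /\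
  (forall w, ~ inW w -> P w = 0).

Definition marg_MU (P : triple -> R) (M : 'I_L.+1) (U : bool) : R :=
  \sum_(X : bool) P (M, U, X).

Definition P_xi_delta (xi : 'I_L.+1 -> bool -> R) (delta2 : R)
  (P : triple -> R) : Prop :=
  pmf_on_W P /\
  \sum_(w : triple) P w *
      (((w.2 : nat)%:R - cMU w.1.1 w.1.2) * xi w.1.1 w.1.2)
  <= delta2 / 3 +
     Num.sqrt ((delta2 / 3) ^+ 2 +
       2 * delta2 * \sum_(M : 'I_L.+1) \sum_(U : bool)
          marg_MU P M U * (cMU M U * (1 - cMU M U) * (xi M U) ^+ 2)).

Definition emp_type (s : seq triple) : triple -> R :=
  fun w => (count_mem w s)%:R / (size s)%:R.

Definition triples (ms : seq 'I_L.+1) (us xs : seq bool) : seq triple :=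
  zip (zip ms us) xs.

Definition bern_prod (ms : seq 'I_L.+1) (us xs : seq bool) : R :=
  \prod_(t <- triples ms us xs)
    (cMU t.1.1 t.1.2 ^+ (t.2 : nat) * (1 - cMU t.1.1 t.1.2) ^+ (1 - (t.2 : nat))).

End Defs.

(* Main.v *)
Require Import Defs.
From HB Require Import structures.
From mathcomp Require Import all_boot all_order all_algebra.
From mathcomp Require Import all_classical all_reals all_analysis.
Import Order.TTheory GRing.Theory Num.Theory.
Local Open Scope ring_scope.
Local Open Scope classical_set_scope.
From mathcomp Require Import ring lra zify.
Lemma fact_ge (k : nat) : (2 * 3 ^ k <= k.+2`!)%N.
Proof.
elim: k => [|k IH]; first by [].
rewrite factS expnS mulnCA; apply: leq_mul => //.
Qed.

Lemma geom_le (R : realType) (q : R) (j : nat) : 0 <= q < 1 ->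
  \sum_(0 <= k < j) q ^+ k <= (1 - q)^-1.
Proof.
move=> /andP[q0 q1].
have h1 : 0 < 1 - q by lra.
elim: j => [|j IH].
  by rewrite big_geq // invr_ge0 ltW.
rewrite big_nat_recl // expr0.
under eq_bigr do rewrite exprS.
rewrite -mulr_sumr.
have : 1 + q * (1 - q)^-1 = (1 - q)^-1.
  by field; lra.
move=> <-; rewrite lerD2l; apply: ler_wpM2l => //.
Qed.

Lemma term_le (R : realType) (lam z : R) k : 0 <= lam -> `|z| <= lam ->
  z ^+ k.+2 / (k.+2)`!%:R <= z ^+ 2 / 2 * (lam / 3) ^+ k.
Proof.
move=> l0 zl.
apply: (le_trans (ler_norm _)).
rewrite normrM normfV normrX [`|(_`!%:R : R)|]ger0_norm ?ler0n //.
have -> : `|z| ^+ k.+2 = z ^+ 2 * `|z| ^+ k.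
  by rewrite exprSr exprSr -mulrA -expr2 real_normK ?num_real // mulrC.
have hf : ((2 * 3 ^ k)%:R <= (k.+2)`!%:R :> R) by rewrite ler_nat fact_ge.
have p3 : 0 < (3 ^ k)%:R :> R by rewrite ltr0n expn_gt0.
rewrite natrM natrX in hf.
have -> : z ^+ 2 / 2 * (lam / 3) ^+ k = z ^+ 2 * lam ^+ k / (2 * 3 ^+ k).
  by rewrite expr_div_n; field; rewrite expf_neq0.
rewrite -!mulrA [z * (z * _)]mulrA [z * (z * _)]mulrA -expr2.
apply: ler_wpM2l; first exact: sqr_ge0.
apply: ler_pM.
- exact: exprn_ge0.
- by rewrite invr_ge0 ler0n.
- by apply: lerXn2r => //; rewrite nnegrE.
- by rewrite lef_pV2 ?posrE.
Qed.

Lemma exp_partial (R : realType) (lam z : R) j : 0 <= lam -> lam < 3 -> `|z| <= lam ->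
  series (exp_coeff z) j.+2 <= 1 + z + z ^+ 2 / (2 * (1 - lam / 3)).
Proof.
move=> l0 l3 zl.
rewrite /series /= big_nat_recl // big_nat_recl //.
rewrite /exp_coeff /= expr0 expr1 fact0 divr1 divr1 addrA.
rewrite lerD2l.
have q0 : 0 <= lam / 3 by lra.
have q1 : lam / 3 < 1 by lra.
apply: (le_trans (y := \sum_(0 <= k < j) z ^+ 2 / 2 * (lam / 3) ^+ k)).
  by apply: ler_sum => k _; apply: term_le.
rewrite -mulr_sumr.
have hg := @geom_le R (lam / 3) j ltac:(apply/andP; split => //).
have -> : z ^+ 2 / (2 * (1 - lam / 3)) = z ^+ 2 / 2 * (1 - lam / 3)^-1.
  by field; lra.
apply: ler_wpM2l => //.
by apply: divr_ge0 => //; apply: sqr_ge0.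
Qed.

Lemma exp_bnd (R : realType) (lam z : R) : 0 <= lam -> lam < 3 -> `|z| <= lam ->
  expR z <= 1 + z + z ^+ 2 / (2 * (1 - lam / 3)).
Proof.
move=> l0 l3 zl.
rewrite /expR; apply: limr_le; first exact: is_cvg_series_exp_coeff.
near=> n.
have [j ->] : exists j, n = j.+2.
  by exists n.-2; near: n; exists 2%N => // m /= hm; lia.
exact: exp_partial.
Unshelve. all: by end_near.
Qed.

Lemma mgf1 (R : realType) (lam c xi : R) : 0 <= lam -> lam < 3 -> 0 <= c <= 1 -> `|xi| <= 1 ->
  c * expR (lam * ((1 - c) * xi)) + (1 - c) * expR (lam * ((0 - c) * xi)) <=
  1 + lam ^+ 2 * (c * (1 - c) * xi ^+ 2) / (2 * (1 - lam / 3)).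
Proof.
move=> l0 l3 /andP[c0 c1] hx.
set K := (2 * (1 - lam / 3))^-1.
have hn : 0 <= `|xi| by [].
have e1 := @exp_bnd R lam (lam * ((1 - c) * xi)) l0 l3.
have e2 := @exp_bnd R lam (lam * ((0 - c) * xi)) l0 l3.
rewrite -/K in e1 e2.
have n1 : `|lam * ((1 - c) * xi)| <= lam.
  rewrite !normrM (ger0_norm l0) (@ger0_norm _ (1 - c)); last by lra.
  have : (1 - c) * `|xi| <= 1 by nra.
  nra.
have n2 : `|lam * ((0 - c) * xi)| <= lam.
  rewrite !normrM (ger0_norm l0) sub0r normrN (ger0_norm c0).
  have : c * `|xi| <= 1 by nra.
  nra.
have := e1 n1; have := e2 n2 => {}e2 {}e1.
have c1' : 0 <= 1 - c by lra.
apply: (le_trans (lerD (ler_wpM2l c0 e1) (ler_wpM2l c1' e2))).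
rewrite le_eqVlt; apply/orP; left; apply/eqP.
rewrite /K; field; lra.
Qed.

Fixpoint allseqs (n : nat) : seq (seq bool) :=
  if n is n'.+1 then map (cons true) (allseqs n') ++ map (cons false) (allseqs n')
  else [:: [::]].

Lemma mem_allseqs n xs : (xs \in allseqs n) = (size xs == n).
Proof.
have hinj (b : bool) : injective (cons b) by move=> a c [].
elim: n xs => [|n IH] [|b xs] //=; rewrite mem_cat.
  by apply/negbTE/negP => /orP [] /mapP [].
rewrite eqSS -IH; case: b; rewrite (mem_map (hinj _));
  case: (xs \in allseqs n); rewrite ?orbT ?orbF //;
  by apply/negP => /mapP [zs _].
Qed.

Lemma uniq_allseqs n : uniq (allseqs n).
Proof.
elim: n => [|n IH] //=.
rewrite cat_uniq !map_inj_uniq //=; try by move=> a b [].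
rewrite IH andbT /=; apply/hasPn => xs /mapP [ys _ ->].
by apply/negP => /mapP [zs _].
Qed.

Lemma mem_zip1 (A B : eqType) (s : seq A) (t : seq B) w :
  w \in zip s t -> w.1 \in s.
Proof.
elim: s t => [|a s IH] [|b t] //=.
rewrite !in_cons => /orP [/eqP -> | /IH ->]; by rewrite ?eqxx ?orbT.
Qed.

Section Chern.
Variables (R : realType) (L : nat) (xi : 'I_L.+1 -> bool -> R).

Definition Yf (w : triple L) : R :=
  ((w.2 : nat)%:R - cMU R L w.1.1 w.1.2) * xi w.1.1 w.1.2.
Definition phi (w : triple L) : R :=
  cMU R L w.1.1 w.1.2 ^+ (w.2 : nat) * (1 - cMU R L w.1.1 w.1.2) ^+ (1 - (w.2 : nat)).

Lemma sum_prod (g : triple L -> R) n ms us : size ms = n -> size us = n ->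
  \sum_(xs <- allseqs n) \prod_(w <- triples L ms us xs) g w =
  \prod_(p <- zip ms us) (g (p, true) + g (p, false)).
Proof.
elim: n ms us => [|n IH] [|m ms] [|u us] //=.
  by move=> _ _; rewrite big_seq1 /triples /= !big_nil.
move=> [hm] [hu].
rewrite big_cat !big_map /= big_cons -(IH ms us hm hu) mulrDl !mulr_sumr.
by rewrite /triples /=; congr (_ + _); apply: eq_bigr => xs _; rewrite big_cons.
Qed.


Definition Vsum (ms : seq 'I_L.+1) (us : seq bool) : R :=
  \sum_(p <- zip ms us) (cMU R L p.1 p.2 * (1 - cMU R L p.1 p.2) * xi p.1 p.2 ^+ 2).

Lemma chernoff n ms us (lam a : R) :
  size ms = n -> size us = n -> 0 <= lam -> lam < 3 ->
  (forall p, p \in zip ms us -> 0 <= cMU R L p.1 p.2 <= 1 /\ `|xi p.1 p.2| <= 1) ->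
  \sum_(xs <- allseqs n | a < \sum_(w <- triples L ms us xs) Yf w)
     \prod_(w <- triples L ms us xs) phi w
  <= expR (- (lam * a) + lam ^+ 2 * Vsum ms us / (2 * (1 - lam / 3))).
Proof.
move=> hm hu l0 l3 H.
have phi0 xs : 0 <= \prod_(w <- triples L ms us xs) phi w.
  rewrite big_seq; apply: prodr_ge0 => w /mem_zip1 hp.
  have [/andP [c0 c1] _] := H _ hp.
  by rewrite /phi; apply: mulr_ge0; apply: exprn_ge0; lra.
apply: (le_trans (y := \sum_(xs <- allseqs n) (\prod_(w <- triples L ms us xs) phi w) *
   expR (lam * (\sum_(w <- triples L ms us xs) Yf w - a)))).
  rewrite big_mkcond /=; apply: ler_sum => xs _; case: ifP => h.
  - rewrite -{1}[\prod_(w <- _) _]mulr1; apply: ler_wpM2l => //.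
    have := expR_ge1Dx (lam * (\sum_(w <- triples L ms us xs) Yf w - a)).
    have : 0 <= lam * (\sum_(w <- triples L ms us xs) Yf w - a).
      by apply: mulr_ge0 => //; rewrite subr_ge0 ltW.
    lra.
  - by apply: mulr_ge0 => //; apply: expR_ge0.
have -> : \sum_(xs <- allseqs n) (\prod_(w <- triples L ms us xs) phi w) *
   expR (lam * (\sum_(w <- triples L ms us xs) Yf w - a)) =
   expR (- (lam * a)) * \sum_(xs <- allseqs n) \prod_(w <- triples L ms us xs)
     (phi w * expR (lam * Yf w)).
  rewrite mulr_sumr; apply: eq_bigr => xs _.
  rewrite mulrBr addrC expRD mulr_sumr expR_sum [in RHS]big_split /=.
  by rewrite mulrCA.
rewrite (@sum_prod _ n ms us hm hu) expRD; apply: ler_wpM2l; first exact: expR_ge0.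
rewrite /Vsum mulr_sumr mulr_suml expR_sum.
rewrite big_seq_cond [X in _ <= X]big_seq_cond; apply: ler_prod => p /andP [hp _].
have [hc hx] := H _ hp.
apply/andP; split.
  have [c0 c1] := andP hc.
  rewrite /phi /Yf /= subnn subn0 expr1 expr0 mulr1 mul1r.
  by apply: addr_ge0; apply: mulr_ge0; rewrite ?expR_ge0 //; lra.
apply: (le_trans _ (expR_ge1Dx _)).
have := @mgf1 _ _ _ _ l0 l3 hc hx.
rewrite /phi /Yf /= subnn subn0 expr1 expr0 mulr1 mul1r.
by rewrite -!mulrA.
Qed.

End Chern.
Lemma choose_lam (R : realType) (nn d V : R) : 0 < nn -> 0 < d -> 0 <= V ->
  exists lam, [/\ 0 <= lam, lam < 3 &
   - (lam * (nn * (d / 3 + Num.sqrt ((d / 3) ^+ 2 + 2 * d * (V / nn)))))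
   + lam ^+ 2 * V / (2 * (1 - lam / 3)) <= - (nn * d)].
Proof.
move=> n0 d0 V0.
set s := Num.sqrt _.
have s0 : 0 <= s by apply: sqrtr_ge0.
have hs : s ^+ 2 = (d / 3) ^+ 2 + 2 * d * (V / nn).
  rewrite sqr_sqrtr //; apply: addr_ge0; first exact: sqr_ge0.
  by apply: mulr_ge0; [lra | apply: divr_ge0 => //; lra].
have [V00 | Vp] := eqVneq V 0.
  exists 2; split => //; first lra.
  subst V; rewrite mul0r mulr0 addr0 in hs. rewrite mulr0 mul0r addr0.
  have : s >= d / 3.
    have hq : (s - d / 3) * (s + d / 3) = 0 by rewrite -subr_sqr hs subrr.
    have : s + d / 3 != 0 by rewrite gt_eqF //; lra.
    move: hq => /eqP; rewrite mulf_eq0 => /orP [/eqP h1 _ | h1 /negP //]; lra.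
  nra.
have Vp' : 0 < V by rewrite lt_def Vp V0.
set sig := V / nn.
have sg0 : 0 < sig by apply: divr_gt0.
set t := d / 3 + s.
have t0 : 0 < t by rewrite /t; lra.
set D := sig + t / 3.
have D0 : 0 < D by rewrite /D; lra.
exists (t / D); split.
- by apply: divr_ge0; lra.
- rewrite ltr_pdivrMr //; rewrite /D; lra.
have hV : V = nn * sig by rewrite /sig; field; lra.
have hD : 1 - t / D / 3 = sig / D by rewrite /D; field; lra.
rewrite hD.
have -> : t / D * (nn * t) = nn * t ^+ 2 / D by field; lra.
have -> : (t / D) ^+ 2 * V / (2 * (sig / D)) = nn * t ^+ 2 / (2 * D).
  by rewrite hV; field; rewrite (gt_eqF D0) (gt_eqF sg0).
have ht : t ^+ 2 = 2 * d * D.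
  have e : t ^+ 2 - 2 * d * D = s ^+ 2 - ((d / 3) ^+ 2 + 2 * d * sig).
    by rewrite /D /t; ring.
  by move: e; rewrite hs subrr => /eqP; rewrite subr_eq0 => /eqP.
rewrite ht le_eqVlt; apply/orP; left; apply/eqP; field; lra.
Qed.

Lemma sum_count (R : realType) (T : finType) (s : seq T) (F : T -> R) :
  \sum_(w : T) (count_mem w s)%:R * F w = \sum_(w <- s) F w.
Proof.
elim: s => [|a s IH].
  by rewrite big_nil big1 // => w _; rewrite /= mul0r.
rewrite big_cons -IH /=.
under eq_bigr do rewrite natrD mulrDl.
rewrite big_split /=; congr (_ + _).
rewrite (bigD1 a) //= eqxx mul1r big1 ?addr0 // => w.
by rewrite eq_sym => /negbTE ->; rewrite mul0r.
Qed.

Section Emp.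
Variables (R : realType) (L : nat).

Lemma emp_sum (s : seq (triple L)) (F : triple L -> R) :
  \sum_(w : triple L) emp_type R L s w * F w = (\sum_(w <- s) F w) / (size s)%:R.
Proof.
rewrite -(@sum_count R _ s F) mulr_suml; apply: eq_bigr => w _.
by rewrite /emp_type mulrAC.
Qed.

Lemma emp_pmf (s : seq (triple L)) : (0 < size s)%N ->
  (forall w, w \in s -> inW L w) -> pmf_on_W R L (emp_type R L s).
Proof.
move=> hs hW; split; [|split].
- by move=> w; rewrite /emp_type divr_ge0.
- have := emp_sum s (fun _ => 1).
  under eq_bigr do rewrite mulr1.
  have h1 : \sum_(w <- s) (1 : R) = (size s)%:R.
    by elim: (s) => [|a s' IH]; rewrite ?big_nil // big_cons IH /= -add1n natrD.
  by move=> ->; rewrite h1 divff // pnatr_eq0 -lt0n.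
- move=> w hw; rewrite /emp_type.
  have /count_memPn -> : w \notin s by apply/negP => /hW.
  by rewrite mul0r.
Qed.

Lemma marg_sum (s : seq (triple L)) (G : 'I_L.+1 -> bool -> R) :
  \sum_(M : 'I_L.+1) \sum_(U : bool) marg_MU R L (emp_type R L s) M U * G M U =
  (\sum_(w <- s) G w.1.1 w.1.2) / (size s)%:R.
Proof.
rewrite -emp_sum.
under eq_bigr do under eq_bigr do rewrite /marg_MU mulr_suml.
rewrite pair_big /= pair_big /=.
by apply: eq_bigr => -[[M U] X] _.
Qed.

Lemma sum_triples1 (ms : seq 'I_L.+1) (us xs : seq bool) (G : 'I_L.+1 -> bool -> R) :
  (size (zip ms us) <= size xs)%N ->
  \sum_(w <- triples L ms us xs) G w.1.1 w.1.2 = \sum_(p <- zip ms us) G p.1 p.2.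
Proof.
move=> h; rewrite /triples -(unzip1_zip h) big_map.
by rewrite unzip1_zip.
Qed.

End Emp.

Lemma inW_c (R : realType) (L : nat) (hL : (2 <= L)%N) (w : triple L) :
  inW L w -> 0 <= cMU R L w.1.1 w.1.2 <= 1.
Proof.
case: w => [[M U] X] /= [h1 h2].
have hX : ((X : nat) <= 1)%N by move: (X); case.
have hM : (M < L.+1)%N := ltn_ord M.
have [k [hk hkL]] : exists k, (M : nat) = (U : nat) + k /\ (k <= L - 1)%N.
  exists ((M : nat) - (U : nat))%N; split; lia.
rewrite /cMU hk.
have -> : (((U:nat) + k)%:R - (U:nat)%:R : R) = k%:R by rewrite natrD addrAC subrr add0r.
have -> : (L%:R - 1 : R) = (L - 1)%N%:R by rewrite natrB //; lia.
have hp : (0 : R) < (L - 1)%N%:R by rewrite ltr0n; lia.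
apply/andP; split; first by apply: divr_ge0; rewrite ler0n.
by rewrite ler_pdivrMr // mul1r ler_nat.
Qed.

Section Atom.
Variables (R : realType) (L : nat) (hL : (2 <= L)%N) (xi : 'I_L.+1 -> bool -> R)
  (hxi : forall (M : 'I_L.+1) (U : bool), 0 <= cMU R L M U <= 1 -> `|xi M U| <= 1).

Definition condx (d : R) (ms : seq 'I_L.+1) (us xs : seq bool) : bool :=
  `[< (forall w, w \in triples L ms us xs -> inW L w) /\
      ~ P_xi_delta R L xi d (emp_type R L (triples L ms us xs)) >].

Lemma atom_bound n ms us (d : R) :
  (1 <= n)%N -> size ms = n -> size us = n ->
  \sum_(xs <- allseqs n | condx d ms us xs) bern_prod R L ms us xs <= expR (- (n%:R * d)).
Proof.
move=> n1 hm hu.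
have hzs : size (zip ms us) = n by rewrite size_zip hm hu minnn.
have [hh | hnone] := boolP (has (condx d ms us) (allseqs n)); last first.
  by rewrite big_hasC // expR_ge0.
move/hasP: hh => [xs0 hxs0 /asboolP [hW0 _]].
have hs0 : size xs0 = n by move: hxs0; rewrite mem_allseqs => /eqP.
have Hp : forall p, p \in zip ms us -> 0 <= cMU R L p.1 p.2 <= 1 /\ `|xi p.1 p.2| <= 1.
  move=> p hp.
  have : p \in unzip1 (triples L ms us xs0) by rewrite /triples unzip1_zip // hzs hs0.
  move/mapP => [w hw ->].
  have hc := @inW_c R L hL w (hW0 _ hw).
  by split => //; apply: hxi.
have bern0 xs : 0 <= \prod_(w <- triples L ms us xs) phi R L w.
  rewrite big_seq; apply: prodr_ge0 => w /mem_zip1 hp.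
  have [/andP [c0 c1] _] := Hp _ hp.
  by rewrite /phi; apply: mulr_ge0; apply: exprn_ge0; lra.
have V0 : 0 <= Vsum R L xi ms us.
  rewrite /Vsum big_seq; apply: sumr_ge0 => p hp.
  have [/andP [c0 c1] _] := Hp _ hp.
  by apply: mulr_ge0; [apply: mulr_ge0; lra | apply: sqr_ge0].
have [hd | hd] := ltrP 0 d.
- have n0 : (0 : R) < n%:R by rewrite ltr0n.
  have [lam [l0 l3 hexp]] := @choose_lam R n%:R d (Vsum R L xi ms us) n0 hd V0.
  set a := n%:R * (d / 3 + Num.sqrt ((d / 3) ^+ 2 + 2 * d * (Vsum R L xi ms us / n%:R))).
  apply: (le_trans (y := \sum_(xs <- allseqs n | a < \sum_(w <- triples L ms us xs) Yf R L xi w)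
     \prod_(w <- triples L ms us xs) phi R L w)).
    rewrite big_seq_cond [X in _ <= X]big_seq_cond.
    rewrite big_mkcond [X in _ <= X]big_mkcond /=; apply: ler_sum => xs _.
    case hxs: (xs \in allseqs n) => //=.
    case hc: (condx d ms us xs); last by case: ifP.
    have hsx : size xs = n by move: hxs; rewrite mem_allseqs => /eqP.
    move/asboolP: hc => [hW' hbad].
    have hst : size (triples L ms us xs) = n by rewrite /triples size_zip hzs hsx minnn.
    have pmf := @emp_pmf R L (triples L ms us xs) ltac:(by rewrite hst; exact: n1) hW'.
    have -> : a < \sum_(w <- triples L ms us xs) Yf R L xi w.
      rewrite ltNge; apply/negP => hle; apply: hbad; split => //.
      rewrite (emp_sum _ _ _ (Yf R L xi)) (marg_sum _ _ _ (fun M U => cMU R L M U * (1 - cMU R L M U) * xi M U ^+ 2)).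
      rewrite (@sum_triples1 R L ms us xs (fun M U => cMU R L M U * (1 - cMU R L M U) * xi M U ^+ 2)) ?hst ?hzs ?hsx // -/(Vsum R L xi ms us).
      by rewrite ler_pdivrMr // mulrC.
    by [].
  apply: (le_trans (@chernoff R L xi n ms us lam a hm hu l0 l3 Hp)).
  by rewrite ler_expR -/a.
- apply: (le_trans (y := \sum_(xs <- allseqs n) \prod_(w <- triples L ms us xs) phi R L w)).
    rewrite big_mkcond /=; apply: ler_sum => xs _.
    by case: ifP.
  rewrite (@sum_prod R L _ n ms us hm hu) big_seq big1; last first.
    by move=> p _; rewrite /phi /= subnn subn0 expr1 expr0 mulr1 mul1r addrC subrK.
  apply: le_trans (expR_ge1Dx _); rewrite lerDl oppr_ge0.
  by apply: mulr_ge0_le0.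
Qed.

End Atom.
Local Open Scope classical_set_scope.

Section Meas.
Variables (L : nat) (R : realType) (d : measure_display) (T : measurableType d)
  (P : probability T R) (N : T -> nat) (m : T -> seq 'I_L.+1) (u x : T -> seq bool)
  (hmeas : forall (n : nat) (ms : seq 'I_L.+1) (us xs : seq bool),
      measurable [set t | N t = n /\ m t = ms /\ u t = us /\ x t = xs]).

Definition Useq n ms us (s : seq (seq bool)) :=
  [set t | N t = n /\ m t = ms /\ u t = us /\ x t \in s].

Lemma Useq_cons n ms us a s : Useq n ms us (a :: s) =
  [set t | N t = n /\ m t = ms /\ u t = us /\ x t = a] `|` Useq n ms us s.
Proof.
apply/seteqP; split => t /=.
- move=> [h1 [h2 [h3]]]; rewrite in_cons => /orP [/eqP h4 | h4].
  + by left.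
  + by right.
- move=> [[h1 [h2 [h3 h4]]] | [h1 [h2 [h3 h4]]]]; do ! split => //.
  + by rewrite in_cons h4 eqxx.
  + by rewrite in_cons h4 orbT.
Qed.

Lemma Useq_meas n ms us s : measurable (Useq n ms us s).
Proof.
elim: s => [|a s IH].
  rewrite (_ : Useq n ms us [::] = set0) //.
  by apply/seteqP; split => t // [_ [_ [_]]].
by rewrite Useq_cons; apply: measurableU.
Qed.

Lemma Useq_P n ms us s : uniq s ->
  P (Useq n ms us s) = \sum_(xs <- s) P [set t | N t = n /\ m t = ms /\ u t = us /\ x t = xs].
Proof.
elim: s => [|a s IH].
  move=> _; rewrite big_nil (_ : Useq n ms us [::] = set0) ?measure0 //.
  by apply/seteqP; split => t // [_ [_ [_]]].
move=> /= /andP [ha hu].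
rewrite Useq_cons measureU; first by rewrite big_cons; congr (_ + _); apply: IH.
- exact: hmeas.
- exact: Useq_meas.
apply/seteqP; split => t // [[_ [_ [_ h1]]] [_ [_ [_ h2]]]].
by move: ha; rewrite -h1 h2.
Qed.

End Meas.
Local Open Scope classical_set_scope.

Theorem proposition2 (R : realType) (L : nat) (hL : (2 <= L)%N)
  (xi : 'I_L.+1 -> bool -> R)
  (hxi : forall (M : 'I_L.+1) (U : bool),
      0 <= cMU R L M U <= 1 -> `|xi M U| <= 1)
  (eta2 : R) (delta2 : nat -> R)
  (hdelta : forall n : nat, (1 <= n)%N -> expR (- (n%:R * delta2 n)) <= eta2)
  (d : measure_display) (T : measurableType d) (P : probability T R)
  (N : T -> nat) (m : T -> seq 'I_L.+1) (u x : T -> seq bool)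
  (hsize : forall t, size (m t) = N t /\ size (u t) = N t /\ size (x t) = N t)
  (hW : forall t, (1 <= N t)%N ->
      forall w, w \in triples L (m t) (u t) (x t) -> inW L w)
  (hmeas : forall (n : nat) (ms : seq 'I_L.+1) (us xs : seq bool),
      measurable [set t | N t = n /\ m t = ms /\ u t = us /\ x t = xs])
  (hcond : forall (n : nat) (ms : seq 'I_L.+1) (us xs : seq bool),
      (1 <= n)%N -> size ms = n -> size us = n -> size xs = n ->
      P [set t | N t = n /\ m t = ms /\ u t = us /\ x t = xs] =
        ((bern_prod R L ms us xs)%:E *
         P [set t | N t = n /\ m t = ms /\ u t = us])%E) :
  (P [set t | (1 <= N t)%N /\
        ~ P_xi_delta R L xi (delta2 (N t))
            (emp_type R L (triples L (m t) (u t) (x t)))] <= eta2%:E)%E.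
Proof.
have eta0 : 0 <= eta2 := le_trans (expR_ge0 _) (hdelta 1%N (leqnn 1)).
pose I := (nat * seq 'I_L.+1 * seq bool)%type.
pose Aset (a : I) := [set t | N t = a.1.1 /\ m t = a.1.2 /\ u t = a.2].
pose cnd (a : I) xs := [&& (1 <= a.1.1)%N, size a.1.2 == a.1.1, size a.2 == a.1.1 &
   condx R L xi (delta2 a.1.1) a.1.2 a.2 xs].
pose Fset (a : I) := Useq L d T N m u x a.1.1 a.1.2 a.2 (seq.filter (cnd a) (allseqs a.1.1)).
have hA a : Aset a = Useq L d T N m u x a.1.1 a.1.2 a.2 (allseqs a.1.1).
  apply/seteqP; split => t /=.
  - move=> [h1 [h2 h3]]; do !split => //.
    by have [_ [_ hx]] := hsize t; rewrite mem_allseqs hx h1.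
  - by move=> [h1 [h2 [h3 _]]].
have hAm a : measurable (Aset a) by rewrite hA; apply: Useq_meas.
have hFm a : measurable (Fset a) by apply: Useq_meas.
have hFA a : Fset a `<=` Aset a by move=> t [h1 [h2 [h3 _]]].
have hFb a : (P (Fset a) <= eta2%:E * P (Aset a))%E.
  rewrite /Fset (@Useq_P L R d T P N m u x hmeas); last by rewrite filter_uniq // uniq_allseqs.
  case: a => [[n ms] us] /=.
  have [hc | hc] := boolP [&& (1 <= n)%N, size ms == n & size us == n]; last first.
    rewrite (_ : seq.filter _ _ = [::]) ?big_nil.
      by apply: mule_ge0 => //; rewrite lee_fin.
    apply/eqP; rewrite -[_ == _]negbK -has_filter; apply/hasPn => xs _.
    rewrite /cnd /=; apply/negP => /and4P [h1 h2 h3 _]; move/negP: hc; apply.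
    by rewrite h1 h2 h3.
  move/and3P: hc => [n1 /eqP hm /eqP hu].
  rewrite big_filter.
  have hPA : P [set t | N t = n /\ m t = ms /\ u t = us] =
      (fine (P [set t | N t = n /\ m t = ms /\ u t = us]))%:E.
    rewrite fineK // ge0_fin_numE ?measure_ge0 //.
    apply: (le_lt_trans (probability_le1 P (hAm (n, ms, us)))).
    by rewrite ltry.
  have -> : (\sum_(xs <- allseqs n | cnd (n, ms, us) xs)
       P [set t | N t = n /\ m t = ms /\ u t = us /\ x t = xs])%R =
     (\sum_(xs <- allseqs n | condx R L xi (delta2 n) ms us xs)
       ((bern_prod R L ms us xs)%:E *
         (fine (P [set t | N t = n /\ m t = ms /\ u t = us]))%:E)%E)%R.
    rewrite big_seq_cond [RHS]big_seq_cond; apply: eq_big => xs.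
      by rewrite /cnd /= n1 hm hu eqxx.
    move=> /andP [hx _].
    rewrite -hPA; apply: hcond => //.
    by move: hx; rewrite mem_allseqs => /eqP.
  under eq_bigr do rewrite -EFinM.
  rewrite sumEFin -mulr_suml EFinM -hPA.
  apply: lee_wpmul2r; first exact: measure_ge0.
  rewrite lee_fin; apply: le_trans (hdelta n n1).
  exact: atom_bound.
pose Fk k := if @pickle_inv I k is Some a then Fset a else set0.
pose Ak k := if @pickle_inv I k is Some a then Aset a else set0.
have hFkA k : Fk k `<=` Ak k.
  by rewrite /Fk /Ak; case: (pickle_inv k) => [a|] //; apply: hFA.
have hFkm k : measurable (Fk k) by rewrite /Fk; case: (pickle_inv k).
have hAkm k : measurable (Ak k) by rewrite /Ak; case: (pickle_inv k).
have trA : trivIset setT Ak.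
  move=> i j _ _ [t [hi hj]]; move: hi hj; rewrite /Ak.
  case Ei: (pickle_inv i) => [a|] //; case Ej: (pickle_inv j) => [b|] //.
  case: a Ei => [[n1 ms1] us1] Ei; case: b Ej => [[n2 ms2] us2] Ej /=.
  move=> [h1 [h2 h3]] [h1' [h2' h3']].
  have := @pickle_invK I i; rewrite Ei /= => <-.
  have := @pickle_invK I j; rewrite Ej /= => <-.
  by congr pickle; simpl in h1, h2, h3, h1', h2', h3'; congruence.
have trF : trivIset setT Fk.
  move=> i j _ _ [t [hi hj]]; apply: trA => //.
  by exists t; split; apply: hFkA.
rewrite (_ : [set t | _] = \bigcup_k Fk k); last first.
  apply/seteqP; split => t /=.
  - move=> [h1 hbad]; exists (pickle ((N t, m t, u t) : I)) => //.
    rewrite /Fk pickleK_inv /Fset /Useq /=; do !split => //.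
    have [hm [hu hx]] := hsize t.
    rewrite mem_filter mem_allseqs hx eqxx andbT /cnd /= h1 hm hu eqxx /=.
    by apply/asboolP; split => //; apply: hW.
  - move=> [k _]; rewrite /Fk; case: (pickle_inv k) => [[[n ms] us]|] //=.
    move=> [h1 [h2 [h3]]]; rewrite mem_filter => /andP [/and4P [n1 _ _ hc] _].
    move/asboolP: hc => [_ hbad].
    by rewrite h1 h2 h3; split.
rewrite measure_bigcup //.
apply: (le_trans (y := \big[+%E/0]_(0 <= i <oo | i \in setT) (eta2%:E * P (Ak i)))%E).
  apply: lee_nneseries => [i _ _|i _]; first exact: measure_ge0.
  rewrite /Fk /Ak; case: (pickle_inv i) => [a|]; first exact: hFb.
  by rewrite !measure0 mule0.
rewrite nneseriesZl; last by move=> i _; apply: measure_ge0.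
rewrite -measure_bigcup //.
rewrite -[X in (_ <= X)%E]mule1; apply: lee_wpmul2l; first by rewrite lee_fin.
apply: probability_le1; exact: bigcup_measurable.
Qed.
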